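(* Let $D\ge3$ and $n=2^D-1$, with coordinates indexed by $\mathbb F_2^D\setminus\{0\}$. Let $C\subseteq\mathbb F_2^n$ be the span of the restrictions to $\mathbb F_2^D\setminus\{0\}$ of the evaluation vectors of $1,x_1,\dots,x_D$ (the punctured first-order Reed–Muller code). Let $H_X$ be the single all-ones row of length $n$ and let $H_Z$ be any matrix with $\mathrm{rs}(H_Z)=C^\perp$. Then $(H_X,H_Z)$ is a CSS code with $k=D$, $d_X=2^{D-1}-1$ and $d_Z=2$, and it is phantom.
   Context: The evaluation vector of a Boolean polynomial $f$ in $x_1,\dots,x_D$ is $(f(a))_a$. $C^\perp$ is the dual code with respect to the standard dot product. CSS conventions: a CSS code is specified by $H_X,H_Z$ over $\mathbb F_2$ with $H_XH_Z^T=0$; $k=n-\operatorname{rank}H_X-\operatorname{rank}H_Z$; $d_X=\min\{|v|:v\in\ker H_Z\setminus\mathrm{rs}(H_X)\}$, $d_Z=\min\{|v|:v\in\ker H_X\setminus\mathrm{rs}(H_Z)\}$, where $\mathrm{rs}$ is row space and $\ker M=\{v:Mv^T=0\}$. A CSS logical basis is $L_X,L_Z\in\mathbb F_2^{k\times n}$ with rows of $L_X$ in $\ker H_Z$, rows of $L_Z$ in $\ker H_X$, $L_XL_Z^T=I_k$. A permutation with matrix $P$ implements the logical CNOT circuit $A\in GL(k,\mathbb F_2)$ if $\mathrm{rs}(H_XP)=\mathrm{rs}(H_X)$, $\mathrm{rs}(H_ZP)=\mathrm{rs}(H_Z)$, rows of $L_XP-AL_X$ lie in $\mathrm{rs}(H_X)$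 and rows of $L_ZP-A^{-T}L_Z$ lie in $\mathrm{rs}(H_Z)$. The code is phantom if some CSS logical basis admits, for every ordered pair $a\ne b$ in $[k]$, a permutation implementing $I_k+E_{ab}$ ($E_{ab}$ the matrix unit). *)

(* Defs.v *)
From HB Require Import structures.
From mathcomp Require Import all_boot all_order all_algebra all_fingroup.
Set Implicit Arguments. Unset Strict Implicit. Unset Printing Implicit Defensive.
Import GRing.Theory.
Local Open Scope ring_scope.

Notation F2 := 'F_2.

Definition wt n (v : 'rV[F2]_n) : nat := #|[set j | v 0 j != 0]|.

(* Coordinates of F_2^D \ {0}: column i : 'I_(2^D-1) is the nonzero vector
   whose j-th coordinate (j < D) is bit j of i+1. *)
Definition coordpt (D : nat) (i : nat) (j : nat) : F2 := (odd (i.+1 %/ 2 ^ j))%:R.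

(* Generator matrix of the punctured first-order Reed-Muller code:
   row 0 = evaluation vector of 1, row j+1 = evaluation vector of x_{j+1},
   restricted to F_2^D \ {0}. *)
Definition prm_gen (D : nat) : 'M[F2]_(D.+1, 2 ^ D - 1) :=
  \matrix_(r < D.+1, i < 2 ^ D - 1)
     (if (r : nat) == 0%N then 1 else coordpt D i (r : nat).-1).

Definition in_dual m n (G : 'M[F2]_(m, n)) (v : 'rV[F2]_n) : Prop :=
  forall c : 'rV[F2]_n, (c <= G)%MS -> v *m c^T = 0.

Definition is_css m1 m2 n (HX : 'M[F2]_(m1, n)) (HZ : 'M[F2]_(m2, n)) : Prop :=
  HX *m HZ^T = 0.

Definition css_k m1 m2 n (HX : 'M[F2]_(m1, n)) (HZ : 'M[F2]_(m2, n)) : nat :=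
  (n - \rank HX - \rank HZ)%N.

Definition is_min_weight n (P : 'rV[F2]_n -> Prop) (d : nat) : Prop :=
  (exists v, P v /\ wt v = d) /\ (forall v, P v -> (d <= wt v)%N).

Definition dX_is m1 m2 n (HX : 'M[F2]_(m1, n)) (HZ : 'M[F2]_(m2, n)) (d : nat) :=
  is_min_weight (fun v => HZ *m v^T = 0 /\ ~~ (v <= HX)%MS) d.

Definition dZ_is m1 m2 n (HX : 'M[F2]_(m1, n)) (HZ : 'M[F2]_(m2, n)) (d : nat) :=
  is_min_weight (fun v => HX *m v^T = 0 /\ ~~ (v <= HZ)%MS) d.

Definition logical_basis m1 m2 n k (HX : 'M[F2]_(m1, n)) (HZ : 'M[F2]_(m2, n))
    (LX LZ : 'M[F2]_(k, n)) : Prop :=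
  HZ *m LX^T = 0 /\ HX *m LZ^T = 0 /\ LX *m LZ^T = 1%:M.

Definition implements m1 m2 n k (HX : 'M[F2]_(m1, n)) (HZ : 'M[F2]_(m2, n))
    (LX LZ : 'M[F2]_(k, n)) (P : 'M[F2]_n) (A : 'M[F2]_k) : Prop :=
  (HX *m P == HX)%MS /\ (HZ *m P == HZ)%MS /\
  (LX *m P - A *m LX <= HX)%MS /\ (LZ *m P - (invmx A)^T *m LZ <= HZ)%MS.

Definition is_phantom m1 m2 n (HX : 'M[F2]_(m1, n)) (HZ : 'M[F2]_(m2, n)) : Prop :=
  exists LX LZ : 'M[F2]_(css_k HX HZ, n),
    logical_basis HX HZ LX LZ /\
    forall a b : 'I_(css_k HX HZ), a != b ->
      exists s : 'S_n, implements HX HZ LX LZ (perm_mx s) (1%:M + delta_mx a b).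

(* Main.v *)
Require Import Defs.
From HB Require Import structures.
From mathcomp Require Import all_boot all_order all_algebra all_fingroup.
From mathcomp Require Import zify.
Set Implicit Arguments. Unset Strict Implicit. Unset Printing Implicit Defensive.
Import GRing.Theory.
Local Open Scope ring_scope.

Lemma F2_cases (x : F2) : x = 0 \/ x = 1.
Proof. case: x => [[|[|m]]] Hm; [left|right|]; try exact: val_inj. by []. Qed.
Lemma F2_11 : (1 + 1 : F2) = 0. Proof. exact: val_inj. Qed.
Lemma F2_10 : (1 : F2) != 0. Proof. by []. Qed.
Lemma F2_ind (P : F2 -> Prop) : P 0 -> P 1 -> forall x, P x.
Proof. by move=> h0 h1 x; case: (F2_cases x) => ->. Qed.
Lemma F2_10' : (1 : F2) = 0 -> False. Proof. by move=> h; move: F2_10; rewrite h eqxx. Qed.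
Lemma F2_01' : (0 : F2) = 1 -> False. Proof. by move=> h; apply: F2_10'. Qed.
Ltac f2close := rewrite ?addr0 ?add0r ?F2_11 ?mulr0 ?mul0r ?mulr1 ?mul1r;
  repeat (let h := fresh in move=> h; try (exfalso; (apply: F2_10'; exact h) || (apply: F2_01'; exact h))); try done.
Lemma F2_alg (a b c : F2) : a + b = 0 -> a + c = 0 -> a + b + c = 0 -> a = 0.
Proof. elim/F2_ind: a; elim/F2_ind: b; elim/F2_ind: c; f2close. Qed.
Lemma F2_xx (x : F2) : x + x = 0.
Proof. by case: (F2_cases x) => ->; rewrite ?addr0 ?F2_11. Qed.
Lemma F2_nat_inj (b c : bool) : ((b : nat)%:R : F2) = (c : nat)%:R -> b = c.
Proof. by case: b; case: c => //= /eqP; rewrite ?F2_10 // eq_sym F2_10. Qed.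

Lemma nat_bits_eq k p q : (p < 2 ^ k)%N -> (q < 2 ^ k)%N ->
  (forall j, (j < k)%N -> odd (p %/ 2 ^ j) = odd (q %/ 2 ^ j)) -> p = q.
Proof.
elim: k p q => [|k IH] p q hp hq h.
  by clear h; move: hp hq; rewrite expn0; case: p; case: q.
have h0 := h 0%N isT; rewrite expn0 !divn1 in h0.
have e : (p %/ 2 = q %/ 2)%N.
  apply: IH.
  - by rewrite ltn_divLR // -expnSr.
  - by rewrite ltn_divLR // -expnSr.
  move=> j hj; rewrite -!divnMA -expnS; exact: h.
by rewrite -(odd_double_half p) -(odd_double_half q) -!divn2 e h0.
Qed.

Definition LXm D : 'M[F2]_(D, 2 ^ D - 1) := \matrix_(j < D, i < 2 ^ D - 1) coordpt D i j.
Definition bits D (i : 'I_(2 ^ D - 1)) : 'rV[F2]_D := \row_(j < D) LXm D j i.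

Lemma ord_lt D (i : 'I_(2 ^ D - 1)) : (i.+1 < 2 ^ D)%N.
Proof. have := ltn_ord i; have := expn_gt0 2 D; lia. Qed.

Lemma bits_inj D : injective (@bits D).
Proof.
move=> i i' /rowP h; apply: val_inj; apply: succn_inj.
apply: (nat_bits_eq (ord_lt i) (ord_lt i')) => j hj.
have := h (Ordinal hj); rewrite !mxE /coordpt; exact: F2_nat_inj.
Qed.

Lemma bits_neq0 D (i : 'I_(2 ^ D - 1)) : bits i != 0.
Proof.
apply/eqP => /rowP h.
have : i.+1 = 0%N.
  apply: (nat_bits_eq (ord_lt i) (expn_gt0 2 D)) => j hj.
  have := h (Ordinal hj); rewrite !mxE /coordpt div0n /=.
  by move=> e; apply: (@F2_nat_inj _ false); exact: e.
by [].
Qed.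

Lemma card_nz D : #|[set x : 'rV[F2]_D | x != 0]| = (2 ^ D - 1)%N.
Proof.
have := cardsC1 (0 : 'rV[F2]_D).
rewrite card_mx card_Fp // mul1n => e.
rewrite subn1 -e /=; apply: eq_card => x; by rewrite !inE.
Qed.

Lemma bits_im D : [set bits i | i in 'I_(2 ^ D - 1)] = [set x : 'rV[F2]_D | x != 0].
Proof.
apply/eqP; rewrite eqEcard card_nz card_imset ?card_ord; last exact: bits_inj.
rewrite leqnn andbT; apply/subsetP => x /imsetP [i _ ->]; by rewrite inE bits_neq0.
Qed.

Lemma bits_surj D (x : 'rV[F2]_D) : x != 0 -> exists i, bits i = x.
Proof.
move=> hx; have : x \in [set bits i | i in 'I_(2 ^ D - 1)] by rewrite bits_im inE.
by case/imsetP => i _ ->; exists i.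
Qed.

Lemma card_bits D (P : 'rV[F2]_D -> bool) :
  #|[set i : 'I_(2 ^ D - 1) | P (bits i)]| = #|[set x | (x != 0) && P x]|.
Proof.
rewrite -(card_imset _ (@bits_inj D)); apply: eq_card => x.
rewrite inE; apply/imsetP/andP.
  by case=> i; rewrite inE => hP ->; rewrite bits_neq0.
by case=> /bits_surj [i <-] hP; exists i; rewrite ?inE.
Qed.

Definition lin D (u x : 'rV[F2]_D) : F2 := (x *m u^T) 0 0.

Lemma linD D (u x y : 'rV[F2]_D) : lin u (x + y) = lin u x + lin u y.
Proof. by rewrite /lin mulmxDl mxE. Qed.

Lemma lin_delta D (u : 'rV[F2]_D) k : lin u (delta_mx 0 k) = u 0 k.
Proof. by rewrite /lin -rowE !mxE. Qed.

Lemma nz_coord D (u : 'rV[F2]_D) : u != 0 -> exists k, u 0 k = 1.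
Proof.
move=> hu; case: (pickP (fun k => u 0 k != 0)) => [k hk | h].
  by exists k; case: (F2_cases (u 0 k)) hk => ->.
case/eqP: hu; apply/rowP => k; have := h k; move/negbFE/eqP; by rewrite mxE.
Qed.

Lemma card_lin D (u : 'rV[F2]_D) (b : F2) : u != 0 ->
  #|[set x : 'rV[F2]_D | lin u x == b]| = (2 ^ (D - 1))%N.
Proof.
move=> /nz_coord [k hk].
set e : 'rV[F2]_D := delta_mx 0 k.
have le x : lin u (x + e) = lin u x + 1 by rewrite linD lin_delta hk.
set S0 := [set x : 'rV[F2]_D | lin u x == 0].
have hC : ~: S0 = [set x | lin u x == 1].
  apply/setP => x; rewrite !inE; by case: (F2_cases (lin u x)) => ->.
have hI : [set x | lin u x == 1] = (fun x => x + e) @: S0.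
  apply/setP => x; rewrite inE; apply/eqP/imsetP.
    move=> h1; exists (x + e); last first.
      apply/rowP => j; rewrite !mxE -addrA F2_xx addr0 //.
    by rewrite inE le h1 F2_11.
  by case=> y; rewrite inE => /eqP h0 ->; rewrite le h0 add0r.
have c1 : #|[set x | lin u x == 1]| = #|S0|.
  by rewrite hI card_imset //; exact: addIr.
have ct := cardsC S0; rewrite hC c1 card_mx card_Fp // mul1n in ct.
have hD : (0 < D)%N by case: k {e le hC hI c1 ct hk} => k /=; lia.
have e2 : (2 ^ D = 2 * 2 ^ (D - 1))%N by rewrite -expnS subn1 prednK.
have c0 : #|S0| = (2 ^ (D - 1))%N by lia.
by case: (F2_cases b) => ->; rewrite ?c1 c0.
Qed.

Lemma G_col D : prm_gen D = col_mx (const_mx 1) (LXm D) :> 'M_(1 + D, _).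
Proof.
apply/matrixP => r i; rewrite !mxE; case: splitP => k hk.
  by rewrite ord1 in hk; rewrite hk /= mxE.
by rewrite hk /= mxE.
Qed.

Lemma uLX D (u : 'rV[F2]_D) i : (u *m LXm D) 0 i = lin u (bits i).
Proof. rewrite /lin !mxE; apply: eq_bigr => j _; by rewrite !mxE mulrC. Qed.

Lemma wG D (w : 'rV[F2]_(D.+1)) i :
  (w *m prm_gen D) 0 i = w 0 0 + lin (rsubmx (w : 'rV_(1 + D))) (bits i).
Proof.
have e : w *m prm_gen D = lsubmx (w : 'rV_(1 + D)) *m const_mx 1 + rsubmx (w : 'rV_(1 + D)) *m LXm D.
  by rewrite -mul_row_col hsubmxK G_col.
rewrite e mxE uLX; congr (_ + _); rewrite mxE big_ord1 !mxE mulr1; congr (w _ _); exact: val_inj.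
Qed.

Lemma memG D (v : 'rV[F2]_(2 ^ D - 1)) : (v <= prm_gen D)%MS ->
  exists c u, forall i, v 0 i = c + lin u (bits i).
Proof. by case/submxP => w ->; exists (w 0 0), (rsubmx (w : 'rV_(1 + D))) => i; rewrite wG. Qed.

Lemma delta_neq0 D (k : 'I_D) : (delta_mx 0 k : 'rV[F2]_D) != 0.
Proof. apply/eqP => /rowP /(_ k); rewrite !mxE !eqxx; exact: F2_10'. Qed.

Lemma G_free D : (2 <= D)%N -> row_free (prm_gen D).
Proof.
move=> hD; apply: inj_row_free => w hw.
set u := rsubmx (w : 'rV_(1 + D)).
have h x : x != 0 -> w 0 0 + lin u x = 0.
  by case/bits_surj => i <-; rewrite -wG hw mxE.
have hk k : w 0 0 + u 0 k = 0.
  rewrite -(lin_delta u); apply: h; exact: delta_neq0.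
have l0 : (0 < D)%N by lia.
pose k0 : 'I_D := Ordinal l0; pose k1 : 'I_D := Ordinal hD.
have hne : (delta_mx 0 k0 + delta_mx 0 k1 : 'rV[F2]_D) != 0.
  apply/eqP => /rowP /(_ k0); rewrite !mxE !eqxx /= addr0; exact: F2_10'.
have w0 : w 0 0 = 0.
  apply: (F2_alg (hk k0) (hk k1)); by rewrite -addrA -!(lin_delta u) -linD h.
apply/rowP => r; rewrite mxE; case: (splitP (r : 'I_(1 + D))) => j hj.
  by rewrite -w0; congr (w _ _); apply: val_inj; rewrite /= hj; case: j {hj} => [[]].
have := hk j; rewrite w0 add0r /u mxE => <-; congr (w _ _); exact: val_inj.
Qed.

Lemma dualE m n (G : 'M[F2]_(m, n)) v : in_dual G v <-> v *m G^T = 0.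
Proof.
split.
  move=> h; apply/rowP => r; have := h _ (row_sub r G).
  by rewrite tr_row colE mulmxA -colE => /colP /(_ 0); rewrite !mxE.
move=> h c /submxP [w ->]; by rewrite trmx_mul mulmxA h mul0mx.
Qed.

Lemma HZ_ker D m (HZ : 'M[F2]_(m, 2 ^ D - 1))
    (hHZ : forall v : 'rV[F2]_(2 ^ D - 1), (v <= HZ)%MS <-> in_dual (prm_gen D) v) :
  (HZ == kermx (prm_gen D)^T)%MS.
Proof.
apply/andP; split; apply/row_subP => r.
  by rewrite sub_kermx; apply/eqP/dualE/hHZ/row_sub.
apply/hHZ/dualE; by rewrite -row_mul mulmx_ker row0.
Qed.

Lemma col_sub_l m1 m2 n (A : 'M[F2]_(m1, n)) (B : 'M[F2]_(m2, n)) : (A <= col_mx A B)%MS.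
Proof. by have := submx_refl (col_mx A B); rewrite col_mx_sub => /andP []. Qed.
Lemma col_sub_r m1 m2 n (A : 'M[F2]_(m1, n)) (B : 'M[F2]_(m2, n)) : (B <= col_mx A B)%MS.
Proof. by have := submx_refl (col_mx A B); rewrite col_mx_sub => /andP []. Qed.

Lemma double_dual r n (G : 'M[F2]_(r, n)) m (HZ : 'M[F2]_(m, n)) (v : 'rV[F2]_n) :
  (HZ == kermx G^T)%MS -> HZ *m v^T = 0 -> (v <= G)%MS.
Proof.
move=> /andP [_ hK] hv.
have Kv : kermx G^T *m v^T = 0 by case/submxP: hK => W ->; rewrite -mulmxA hv mulmx0.
have KC : (kermx G^T <= kermx (col_mx G v)^T)%MS.
  by rewrite sub_kermx tr_col_mx mul_mx_row mulmx_ker Kv row_mx0.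
have r1 := mxrankS KC; rewrite !mxrank_ker !mxrank_tr in r1.
have r2 := rank_leq_col (col_mx G v); have r3 := rank_leq_col G.
have hs := mxrank_leqif_sup (col_sub_l G v).
have : (col_mx G v <= G)%MS.
  rewrite -hs.2; rewrite eqn_leq hs.1 /=; lia.
by rewrite col_mx_sub => /andP [].
Qed.

Lemma rank_G D : (2 <= D)%N -> \rank (prm_gen D) = D.+1.
Proof. by move=> /G_free /eqP. Qed.

Lemma lin_sym D (u x : 'rV[F2]_D) : lin u x = lin x u.
Proof. rewrite /lin !mxE; apply: eq_bigr => j _; by rewrite !mxE mulrC. Qed.

Lemma lin0 D (x : 'rV[F2]_D) : lin 0 x = 0.
Proof. by rewrite /lin trmx0 mulmx0 mxE. Qed.

Lemma cnz D (P : 'rV[F2]_D -> bool) :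
  #|[set x | P x]| = addn (P 0%R) #|[set x | (x != 0) && P x]|.
Proof.
rewrite [LHS](cardsD1 0%R) inE; congr (_ + _)%N; apply: eq_card => x; by rewrite !inE.
Qed.

Lemma F2_neq0 (a b : F2) : (a + b != 0) = (b == 1 + a).
Proof.
elim/F2_ind: a; elim/F2_ind: b; rewrite ?addr0 ?add0r ?F2_11 ?eqxx ?F2_10 //;
  by rewrite ?(eq_sym 0 1) F2_10.
Qed.

Lemma orthG D m (HZ : 'M[F2]_(m, 2 ^ D - 1)) r (Y : 'M[F2]_(r, 2 ^ D - 1)) :
  (HZ == kermx (prm_gen D)^T)%MS -> (Y <= prm_gen D)%MS -> HZ *m Y^T = 0.
Proof.
move=> /andP [h _] /submxP [W ->].
have : HZ *m (prm_gen D)^T = 0 by apply/eqP; rewrite -sub_kermx.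
by rewrite trmx_mul mulmxA => ->; rewrite mul0mx.
Qed.

Lemma HX_sub D : ((const_mx 1 : 'M[F2]_(1, 2 ^ D - 1)) <= prm_gen D)%MS.
Proof. rewrite G_col; exact: col_sub_l. Qed.
Lemma LX_sub D : (LXm D <= prm_gen D)%MS.
Proof. rewrite G_col; exact: (col_sub_r (const_mx 1 : 'M_(1, _)) (LXm D)). Qed.

Lemma wt_bits D (v : 'rV[F2]_(2 ^ D - 1)) (P : 'rV[F2]_D -> bool) :
  (forall i, (v 0 i != 0) = P (bits i)) -> wt v = #|[set x | (x != 0) && P x]|.
Proof. move=> h; rewrite /wt -card_bits; apply: eq_card => j; by rewrite !inE h. Qed.

Lemma card_aff D (u : 'rV[F2]_D) c : u != 0 ->
  #|[set x | c + lin u x != 0]| = (2 ^ (D - 1))%N.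
Proof.
move=> hu; rewrite -(card_lin (1 + c) hu); apply: eq_card => x; by rewrite !inE F2_neq0.
Qed.

Lemma part_dX D (hD : (2 <= D)%N) m (HZ : 'M[F2]_(m, 2 ^ D - 1))
  (hK : (HZ == kermx (prm_gen D)^T)%MS) :
  dX_is (const_mx 1 : 'M[F2]_(1, 2 ^ D - 1)) HZ (2 ^ (D - 1) - 1)%N.
Proof.
have l0 : (0 < D)%N by lia.
pose k0 : 'I_D := Ordinal l0; pose k1 : 'I_D := Ordinal hD.
split.
  pose v : 'rV[F2]_(2 ^ D - 1) := const_mx 1 + row k0 (LXm D).
  have hv i : v 0 i = 1 + bits i 0 k0 by rewrite !mxE.
  exists v; split; [split|].
  - apply: (orthG hK); apply: addmx_sub; first exact: HX_sub.
    exact: submx_trans (row_sub _ _) (LX_sub D).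
  - apply/negP => /sub_rVP [a ha].
    have [p1 hp1] := bits_surj (delta_neq0 k0).
    have [p2 hp2] := bits_surj (delta_neq0 k1).
    have e1 := hv p1; have e2 := hv p2.
    rewrite ha hp1 !mxE mulr1 eqxx F2_11 in e1.
    rewrite ha hp2 !mxE mulr1 /= addr0 in e2.
    by apply: F2_01'; rewrite -e1 -e2.
  - rewrite (@wt_bits _ _ (fun x => 1 + x 0 k0 != 0)); last by move=> i; rewrite hv.
    have := cnz (fun x => 1 + x 0 k0 != 0).
    rewrite mxE addr0 F2_10 /=.
    have -> : #|[set x : 'rV[F2]_D | 1 + x 0 k0 != 0]| = (2 ^ (D - 1))%N.
      rewrite -(card_aff 1 (delta_neq0 k0)); apply: eq_card => x.
      by rewrite !inE lin_sym lin_delta.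
    move=> e; rewrite e; lia.
move=> v [hv hn].
have vG := double_dual hK hv.
case: (memG vG) => c [u hu].
have [u0|unz] := eqVneq u 0.
  case/negP: hn; have -> : v = c *: const_mx 1.
    by apply/rowP => i; rewrite hu u0 lin0 !mxE addr0 mulr1.
  by apply: scalemx_sub.
rewrite (@wt_bits _ _ (fun x => c + lin u x != 0)); last by move=> i; rewrite hu.
have := cnz (fun x => c + lin u x != 0); rewrite card_aff //.
move=> e; rewrite e; lia.
Qed.

Definition pv n (p q : 'I_n) : 'rV[F2]_n := \row_j ((j == p)%:R + (j == q)%:R).

Lemma sum_ind n (F : 'I_n -> F2) p : \sum_j F j * (j == p)%:R = F p.
Proof.
rewrite (bigD1 p) //= eqxx mulr1 big1 ?addr0 // => j /negbTE ->; by rewrite mulr0.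
Qed.

Lemma mul_pv r n (X : 'M[F2]_(r, n)) p q i : (X *m (pv p q)^T) i 0 = X i p + X i q.
Proof.
rewrite mxE -(sum_ind (X i) p) -(sum_ind (X i) q) -big_split /=.
apply: eq_bigr => j _; by rewrite !mxE mulrDr.
Qed.

Lemma bitsE D (i : 'I_(2 ^ D - 1)) (j : 'I_D) : bits i 0 j = coordpt D i j.
Proof. by rewrite !mxE. Qed.

Lemma Gr D (k : 'I_D) i : prm_gen D (rshift 1 k : 'I_(1 + D)) i = bits i 0 k.
Proof. by rewrite !mxE. Qed.

Lemma part_dZ D (hD : (2 <= D)%N) m (HZ : 'M[F2]_(m, 2 ^ D - 1))
  (hK : (HZ == kermx (prm_gen D)^T)%MS) :
  dZ_is (const_mx 1 : 'M[F2]_(1, 2 ^ D - 1)) HZ 2.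
Proof.
have l0 : (0 < D)%N by lia.
pose k0 : 'I_D := Ordinal l0; pose k1 : 'I_D := Ordinal hD.
split.
  have [p1 hp1] := bits_surj (delta_neq0 k0).
  have [p2 hp2] := bits_surj (delta_neq0 k1).
  have p12 : p1 != p2.
    apply/eqP => e; move: hp1; rewrite e hp2 => /rowP /(_ k0); rewrite !mxE eqxx /=.
    exact: F2_01'.
  exists (pv p1 p2); split; [split|].
  - apply/matrixP => i j; rewrite !ord1 mul_pv !mxE; exact: F2_11.
  - apply/negP; move/(submx_trans)/(_ (proj1 (andP hK))); rewrite sub_kermx => /eqP h.
    have := congr1 (fun M => M^T (rshift 1 k0 : 'I_(1 + D)) 0) h.
    rewrite trmx_mul trmxK mul_pv !Gr hp1 hp2 !mxE eqxx /= addr0.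
    exact: F2_10'.
  - rewrite /wt (_ : [set j | _] = [set p1; p2]) ?cards2 ?p12 //; apply/setP => j; rewrite !inE mxE.
    case: (eqVneq j p1) => [->|h1] /=; first by rewrite (negbTE p12) addr0 F2_10.
    by case: (j == p2) => /=; rewrite ?add0r ?F2_10 // eqxx.
move=> v [hv hn]; case: (leqP 2 (wt v)) => // hw.
have hs : (\sum_j v 0 j = 0).
  have := congr1 (fun M : 'M[F2]_1 => M 0 0) hv; rewrite !mxE => e; rewrite -[RHS]e.
  apply: eq_bigr => j _; by rewrite !mxE mul1r.
move: hw; rewrite ltnS leq_eqVlt ltnS leqn0 => /orP [].
  case/cards1P => p hp.
  have hz j : j != p -> v 0 j = 0.
    move=> hj; apply/eqP; apply: contraNT hj => hj.
    have : j \in [set j | v 0 j != 0] by rewrite inE.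
    by rewrite hp inE.
  move: hs; rewrite (bigD1 p) //= big1 ?addr0 => [h|j /hz //].
  have : p \in [set j | v 0 j != 0] by rewrite hp set11.
  by rewrite inE h eqxx.
move/eqP/cards0_eq => h0; case/negP: hn.
have -> : v = 0.
  apply/rowP => j; rewrite mxE; apply/eqP; apply: contraT => hj.
  have : j \in [set j | v 0 j != 0] by rewrite inE.
  by rewrite h0 inE.
exact: sub0mx.
Qed.

Lemma LXE D (j : 'I_D) i : LXm D j i = bits i 0 j.
Proof. by rewrite !mxE. Qed.

Lemma mxF2_xx m n (X : 'M[F2]_(m, n)) : X + X = 0.
Proof. by apply/matrixP => i j; rewrite !mxE F2_xx. Qed.

Lemma kerC D m (HZ : 'M[F2]_(m, 2 ^ D - 1)) (hK : (HZ == kermx (prm_gen D)^T)%MS)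
  r (X : 'M[F2]_(r, 2 ^ D - 1)) :
  X *m (const_mx 1 : 'M[F2]_(1, 2 ^ D - 1))^T = 0 -> X *m (LXm D)^T = 0 -> (X <= HZ)%MS.
Proof.
move=> h1 h2; apply: submx_trans (proj2 (andP hK)); rewrite sub_kermx G_col.
have : X *m (col_mx (const_mx 1 : 'M[F2]_(1, 2 ^ D - 1)) (LXm D))^T = 0.
  by rewrite tr_col_mx mul_mx_row h1 h2 row_mx0.
by move=> ->.
Qed.

Definition inv_bits D (i0 : 'I_(2 ^ D - 1)) (x : 'rV[F2]_D) := odflt i0 [pick i | bits i == x].

Lemma inv_bitsK D i0 (x : 'rV[F2]_D) : x != 0 -> bits (inv_bits i0 x) = x.
Proof.
move=> hx; rewrite /inv_bits; case: pickP => [i /eqP //| h].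
by case: (bits_surj hx) => i hi; move: (h i); rewrite hi eqxx.
Qed.

Definition LZm n D (p q : 'I_D -> 'I_n) : 'M[F2]_(D, n) :=
  \matrix_(a, j) ((j == p a)%:R + (j == q a)%:R).

Lemma mul_LZ r n D (X : 'M[F2]_(r, n)) (p q : 'I_D -> 'I_n) i a :
  (X *m (LZm p q)^T) i a = X i (p a) + X i (q a).
Proof.
rewrite mxE -(sum_ind (X i) (p a)) -(sum_ind (X i) (q a)) -big_split /=.
apply: eq_bigr => j _; by rewrite !mxE mulrDr.
Qed.

Lemma part_ph D (hD : (2 <= D)%N) m (HZ : 'M[F2]_(m, 2 ^ D - 1))
  (hK : (HZ == kermx (prm_gen D)^T)%MS) :
  let HX : 'M[F2]_(1, 2 ^ D - 1) := const_mx 1 in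
  exists LX LZ : 'M[F2]_(D, 2 ^ D - 1),
    logical_basis HX HZ LX LZ /\
    forall a b : 'I_D, a != b ->
      exists s : 'S_(2 ^ D - 1), implements HX HZ LX LZ (perm_mx s) (1%:M + delta_mx a b).
Proof.
move=> HX.
have l0 : (0 < D)%N by lia.
pose k0 : 'I_D := Ordinal l0; pose k1 : 'I_D := Ordinal hD.
have n0 : (0 < 2 ^ D - 1)%N.
  have : (1 < 2 ^ D)%N by rewrite -{1}(expn0 2) ltn_exp2l.
  lia.
pose i0 : 'I_(2 ^ D - 1) := Ordinal n0.
pose c (a : 'I_D) := if a == k0 then k1 else k0.
have hc a : c a != a.
  rewrite /c; case: (eqVneq a k0) => [->|h]; last by rewrite eq_sym.
  by apply/eqP => /(congr1 val).
have nz1 a : (delta_mx 0 a + delta_mx 0 (c a) : 'rV[F2]_D) != 0.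
  apply/eqP => /rowP /(_ a); rewrite !mxE !eqxx /= eq_sym (negbTE (hc a)) addr0.
  exact: F2_10'.
pose p a := inv_bits i0 (delta_mx 0 a + delta_mx 0 (c a)).
pose q a := inv_bits i0 (delta_mx 0 (c a)).
have hp a : bits (p a) = delta_mx 0 a + delta_mx 0 (c a) by rewrite inv_bitsK.
have hq a : bits (q a) = delta_mx 0 (c a) by rewrite inv_bitsK ?delta_neq0.
set LX := LXm D; set LZ := LZm p q.
have HZLX : HZ *m LX^T = 0 by apply: (orthG hK); exact: LX_sub.
have HZHX : HZ *m HX^T = 0 by apply: (orthG hK); exact: HX_sub.
have HXLZ : HX *m LZ^T = 0.
  by apply/matrixP => i a; rewrite mul_LZ !mxE F2_11.
have LXLZ : LX *m LZ^T = 1%:M.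
  apply/matrixP => b a; rewrite mul_LZ !LXE hp hq !mxE !eqxx /=.
  by rewrite -addrA F2_xx addr0.
have LZHX : LZ *m HX^T = 0 by rewrite -[LZ]trmxK -trmx_mul HXLZ trmx0.
have LZLX : LZ *m LX^T = 1%:M by rewrite -[LZ]trmxK -trmx_mul LXLZ trmx1.
exists LX, LZ; split; first by split; [|split].
move=> a b hab.
set A : 'M[F2]_D := 1%:M + delta_mx a b.
have AA : A *m A = 1%:M.
  rewrite /A mulmxDl !mulmxDr !mul1mx mulmx1 mul_delta_mx_0 ?addr0; last by rewrite eq_sym.
  by rewrite -addrA mxF2_xx addr0.
set M := A^T.
have MM : M *m M = 1%:M by rewrite /M -trmx_mul AA trmx1.
have nzM i : bits i *m M != 0.
  apply/eqP => h; move: (bits_neq0 i); rewrite -[bits i]mulmx1 -MM mulmxA h mul0mx eqxx.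
  by [].
pose f i := inv_bits i0 (bits i *m M).
have hf i : bits (f i) = bits i *m M by rewrite inv_bitsK.
have f_inj : injective f.
  move=> i j e; apply: bits_inj.
  by rewrite -[bits i]mulmx1 -[bits j]mulmx1 -MM !mulmxA -!hf e.
pose s := perm f_inj.
have hs i : bits (s i) = bits i *m M by rewrite permE hf.
have ss i : s (s i) = i by apply: bits_inj; rewrite !hs -mulmxA MM mulmx1.
have sinv : (s^-1)%g = s.
  by apply/permP => i; apply: (@perm_inj _ s); rewrite permKV ss.
pose P : 'M[F2]_(2 ^ D - 1) := perm_mx s.
have PE r (X : 'M[F2]_(r, 2 ^ D - 1)) : X *m P = col_perm s X by rewrite col_permE sinv.
have PT : P^T = P by rewrite /P tr_perm_mx sinv.
have PTE r (X : 'M[F2]_(r, 2 ^ D - 1)) : P *m X^T = (X *m P)^T by rewrite trmx_mul PT.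
have HXP : HX *m P = HX by rewrite PE; apply/matrixP => i j; rewrite !mxE.
have LXP : LX *m P = A *m LX.
  rewrite PE /LX; apply/matrixP => j i; rewrite !mxE -bitsE hs mxE.
  apply: eq_bigr => k _; by rewrite !mxE mulrC.
have invA : invmx A = A.
  have [uA _] := mulmx1_unit AA.
  by rewrite -[invmx A]mulmx1 -AA mulmxA mulVmx // mul1mx.
exists s; rewrite -/P; split; [|split; [|split]].
- by rewrite HXP; apply/andP; split.
- have sub : (HZ *m P <= HZ)%MS.
    apply: (kerC hK).
      by rewrite -mulmxA PTE HXP HZHX.
    by rewrite -mulmxA PTE LXP trmx_mul mulmxA HZLX mul0mx.
  have hr : \rank (HZ *m P) = \rank HZ.
    by rewrite mxrankMfree // row_free_unit unitmx_perm.
  have hl := mxrank_leqif_sup sub.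
  apply/andP; split => //; rewrite -hl.2 hr eqxx //.
- by rewrite LXP subrr sub0mx.
- rewrite invA; apply: (kerC hK).
    by rewrite mulmxBl -!mulmxA PTE HXP LZHX mulmx0 subrr.
  rewrite mulmxBl -!mulmxA PTE LXP LZLX mulmx1 trmx_mul mulmxA LZLX mul1mx.
  by rewrite /M subrr.
Qed.

Unset Implicit Arguments.

Theorem mainTheorem13 (D : nat) (hD : (3 <= D)%N) (m : nat)
    (HZ : 'M[F2]_(m, 2 ^ D - 1))
    (hHZ : forall v : 'rV[F2]_(2 ^ D - 1), (v <= HZ)%MS <-> in_dual (prm_gen D) v) :
  let HX : 'M[F2]_(1, 2 ^ D - 1) := const_mx 1 in
  is_css HX HZ /\ css_k HX HZ = D /\
  dX_is HX HZ (2 ^ (D - 1) - 1)%N /\ dZ_is HX HZ 2 /\ is_phantom HX HZ.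
Proof.
move=> HX.
have hD2 : (2 <= D)%N by lia.
have hK := HZ_ker hHZ.
have hk : css_k HX HZ = D.
  have n0 : (0 < 2 ^ D - 1)%N.
    have : (1 < 2 ^ D)%N by rewrite -{1}(expn0 2) ltn_exp2l //; lia.
    lia.
  have hX : HX != 0.
    by apply/eqP => /rowP /(_ (Ordinal n0)); rewrite !mxE; exact: F2_10'.
  rewrite /css_k rank_rV hX (eqmx_rank hK) mxrank_ker mxrank_tr rank_G //.
  have := rank_leq_col (prm_gen D); rewrite rank_G //; lia.
split.
  rewrite /is_css -[HX]trmxK -trmx_mul (orthG hK (HX_sub D)) trmx0 //.
split; first exact: hk.
split; first exact: part_dX.
split; first exact: part_dZ.
rewrite /is_phantom hk; exact: part_ph.
Qed.
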